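(* Let $n\ge 2$, $N=\{1,\dots,n\}$, for each $i\in N$ let $A_i$ be a nonempty finite set, $A=\prod_{i\in N}A_i$, $u_i:A\to\mathbb{R}$, $u(a)=(u_i(a))_{i\in N}$, let $\Delta\in(0,1]$ and $\lambda\in\mathbb{R}^n\setminus\{\mathbf 0\}$. If $\mathcal{A}^*_\lambda(\Delta)\subseteq S^C$, then for every $u^{[n]}\in\mathcal{U}^*_\lambda(\Delta)$ there exists $m\in\{1,\dots,n-1\}$ such that $$-\sum_{k=1}^m\Delta^{k-1}w_k(u^{[n]})+\sum_{k=1}^m\Delta^{k-1}w_{n-m+k}(u^{[n]})<0.$$
   Context: For $a^{[n]}=(a^1,\dots,a^n)\in A^n$ extend indices by $a^s=a^{s-n}$ for $s\ge n+1$, and define $$v_i^\Delta(a^{[n]})=\frac{\sum_{k=1}^n\Delta^{k-1}u_i(a^{i+k-1})}{\sum_{k=1}^n\Delta^{k-1}},\qquad W_\lambda(a^{[n]},\Delta)=\sum_{i=1}^n\lambda_i v_i^\Delta(a^{[n]}).$$ $\mathcal{A}^*_\lambda(\Delta)\subseteq A^n$ is the set of maximizers of $W_\lambda(\cdot,\Delta)$ over $A^n$, and $\mathcal{U}^*_\lambda(\Delta)=\{(u(a^1),\dots,u(a^n)):(a^1,\dots,a^n)\in\mathcal{A}^*_\lambda(\Delta)\}$. $S^0=\{a^{[n]}\in A^n: u(a^1)=u(a^2)=\dots=u(a^n)\}$ and $S^C=A^n\setminus S^0$. For $u^{[n]}=(u^1,\dots,u^n)$ with $u^k\in\mathbb{R}^n$,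 extend indices by $u^m=u^{m-n}$ for $m>n$ and set $w_k(u^{[n]})=\sum_{i=1}^n\lambda_iu_i^{i+k-1}$ for $k=1,\dots,n$. *)

(* Defs.v *)
(* reals abstracted as R : realType. Indices 1..n are 0..n-1. *)
From mathcomp Require Import all_boot all_order all_algebra.
From mathcomp Require Import reals.
Set Implicit Arguments. Unset Strict Implicit. Unset Printing Implicit Defensive.
Import Order.TTheory GRing.Theory Num.Theory.
Local Open Scope ring_scope.

Lemma ord_pos (n : nat) (i : 'I_n) : (0 < n)%N.
Proof. exact: (leq_ltn_trans (leq0n i) (ltn_ord i)). Qed.

(* cyclic index: (i + k) mod n, i.e. the paper's index i+k with a^s = a^{s-n} *)
Definition shift (n : nat) (i : 'I_n) (k : nat) : 'I_n :=
  Ordinal (ltn_pmod (i + k) (ord_pos i)).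

Section Defs.
Variables (R : realType) (n : nat) (A : finType) (u : 'I_n -> A -> R).

(* v_i^Delta(a^[n]) (0-based: k0 = k-1) *)
Definition vD (D : R) (a : 'I_n -> A) (i : 'I_n) : R :=
  (\sum_(k < n) D ^+ k * u i (a (shift i k))) / (\sum_(k < n) D ^+ k).

Definition W (lam : 'I_n -> R) (a : 'I_n -> A) (D : R) : R :=
  \sum_(i < n) lam i * vD D a i.

Definition Astar (lam : 'I_n -> R) (D : R) (a : 'I_n -> A) : Prop :=
  forall b : 'I_n -> A, W lam b D <= W lam a D.

Definition uprof (a : 'I_n -> A) : 'M[R]_n := \matrix_(k, i) u i (a k).

Definition Ustar (lam : 'I_n -> R) (D : R) (U : 'M[R]_n) : Prop :=
  exists a, Astar lam D a /\ U = uprof a.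

Definition S0 (a : 'I_n -> A) : Prop := forall k l : 'I_n, forall i, u i (a k) = u i (a l).
Definition SC (a : 'I_n -> A) : Prop := ~ S0 a.
End Defs.

(* w_k(u^[n]) with 0-based k (paper's w_{k+1}); U k i = u_i^k *)
Definition w (R : realType) (n : nat) (lam : 'I_n -> R) (U : 'M[R]_n) (k : nat) : R :=
  \sum_(i < n) lam i * U (shift i k) i.

(* Main.v *)
Require Import Defs.
From mathcomp Require Import all_boot all_order all_algebra.
From mathcomp Require Import reals.
From mathcomp Require Import ring lra.
Set Implicit Arguments. Unset Strict Implicit.
Import Order.TTheory GRing.Theory Num.Theory.
Local Open Scope ring_scope.

Lemma shift_shift n (i : 'I_n) k r : shift (shift i k) r = shift i (k + r).
Proof. by apply: val_inj => /=; rewrite modnDml addnA. Qed.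

Lemma shift_per n (i : 'I_n) k : shift i (k + n) = shift i k.
Proof. by apply: val_inj => /=; rewrite addnA modnDr. Qed.

Lemma sum_shift (R : realType) n (f : 'I_n -> R) (j : 'I_n) :
  \sum_(r < n) f (shift j r) = \sum_(r < n) f r.
Proof.
have inj : injective (fun r : 'I_n => shift j r).
  move=> r r' /(congr1 val) /= /eqP; rewrite eqn_modDl !modn_small //.
  by move=> /eqP H; apply: val_inj.
by rewrite [RHS](reindex_inj inj).
Qed.

Definition Vs (R : realType) n (D : R) (f : nat -> R) (r : nat) :=
  \sum_(k < n) D ^+ k * f (k + r)%N.

Lemma Vs_per (R : realType) n (D : R) (f : nat -> R) :
  (forall k, f (k + n)%N = f k) -> forall r, Vs n D f (r + n) = Vs n D f r.
Proof. by move=> Hf r; apply: eq_bigr => k _; rewrite addnA Hf. Qed.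

Lemma F4 (R : realType) n (D : R) (f : nat -> R) : (0 < n)%N ->
  (forall k, f (k + n)%N = f k) -> forall r,
  Vs n D f r - D * Vs n D f r.+1 = (1 - D ^+ n) * f r.
Proof.
case: n => // n _ Hf r; rewrite /Vs big_ord_recl big_ord_recr /= mulrDr mulr_sumr.
have -> : \sum_(i < n) D ^+ (lift ord0 i) * f (lift ord0 i + r)%N
   = \sum_(i < n) D * (D ^+ i * f (i + r.+1)%N).
  by apply: eq_bigr => i _; rewrite /= exprS addSnnS mulrA.
have -> : f (n + r.+1)%N = f r by rewrite addnS -addSn addnC Hf.
rewrite exprS expr0; set s := \sum_(i < n) _; ring.
Qed.

Lemma tele (R : realType) n (D : R) (f : nat -> R) : (0 < n)%N ->
  (forall k, f (k + n)%N = f k) -> forall m r,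
  Vs n D f r - D ^+ m * Vs n D f (r + m) = (1 - D ^+ n) * \sum_(k < m) D ^+ k * f (r + k)%N.
Proof.
move=> n0 Hf; elim=> [|m IH] r.
  by rewrite big_ord0 expr0 mul1r addn0 subrr mulr0.
rewrite big_ord_recr /= mulrDr -IH.
have E : (1 - D ^+ n) * (D ^+ m * f (r + m)%N) =
   D ^+ m * (Vs n D f (r + m) - D * Vs n D f (r + m).+1).
  by rewrite (F4 D n0 Hf (r + m)); ring.
by rewrite E addnS exprS; ring.
Qed.

Lemma W_eq (R : realType) n (A : finType) (u : 'I_n -> A -> R) lam D b :
  W u lam b D = (\sum_(k < n) D ^+ k * w lam (uprof u b) k) / (\sum_(k < n) D ^+ k).
Proof.
rewrite /W /vD /w; under eq_bigr => i _ do rewrite mulrA.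
rewrite -mulr_suml; congr (_ * _).
under eq_bigr => i _ do rewrite mulr_sumr.
rewrite exchange_big /=; apply: eq_bigr => k _; rewrite mulr_sumr.
by apply: eq_bigr => i _; rewrite !mxE mulrCA.
Qed.

Definition rotp n (A : Type) (a : 'I_n -> A) (r : nat) := fun j => a (shift j r).

Lemma x_rot (R : realType) n (A : finType) (u : 'I_n -> A -> R) lam a r k :
  w lam (uprof u (rotp a r)) k = w lam (uprof u a) (k + r).
Proof. by apply: eq_bigr => i _; rewrite !mxE /rotp shift_shift. Qed.

Lemma x_per (R : realType) n (lam : 'I_n -> R) U k :
  w lam U (k + n) = w lam U k.
Proof. by apply: eq_bigr => i _; rewrite shift_per. Qed.

Theorem lemma5 (R : realType) (n : nat) (Ai : 'I_n -> finType)
  (u : 'I_n -> {dffun forall i : 'I_n, Ai i} -> R) (D : R) (lam : 'I_n -> R) :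
  (2 <= n)%N ->
  (forall i, (0 < #|Ai i|)%N) ->
  0 < D -> D <= 1 ->
  (exists i, lam i != 0) ->
  (forall a, Astar u lam D a -> SC u a) ->
  forall U : 'M[R]_n, Ustar u lam D U ->
  exists m : nat, [/\ (1 <= m)%N, (m <= n - 1)%N &
    - (\sum_(k < m) D ^+ k * w lam U k)
      + \sum_(k < m) D ^+ k * w lam U (n - m + k)%N < 0].
Proof.
move=> n2 _ D0 D1 _ HSC U [a [Ha ->]].
have n0 : (0 < n)%N by apply: leq_trans n2.
set x := fun k => w lam (uprof u a) k.
set S := \sum_(k < n) D ^+ k.
have S0 : 0 < S.
  rewrite /S; case: (n) n0 => // n' _; rewrite big_ord_recl expr0.
  apply: (lt_le_trans ltr01); rewrite lerDl; apply: sumr_ge0 => i _.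
  exact: exprn_ge0 (ltW D0).
have Hx : forall k, x (k + n)%N = x k by move=> k; exact: x_per.
set V := Vs n D x.
have Wa : W u lam a D = V 0 / S.
  by rewrite W_eq; congr (_ / _); apply: eq_bigr => k _; rewrite addn0.
have HV : forall r, V r <= V 0.
  move=> r; have := Ha (rotp a r); rewrite Wa W_eq.
  under eq_bigr do rewrite x_rot.
  by rewrite ler_pM2r // invr_gt0.
case: (boolP [exists m : 'I_n, (1 <= m)%N &&
   (- (\sum_(k < m) D ^+ k * x k) + \sum_(k < m) D ^+ k * x (n - m + k)%N < 0)]).
  move=> /existsP [m /andP [m1 Hm]]; exists m; split => //.
  by rewrite -ltnS subn1 prednK // ltn_ord.
rewrite negb_exists => /forallP HG; exfalso.
have Vge : forall r, (r < n)%N -> V 0 <= V r.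
  have [D1'|D1'] := ltP D 1; last first.
    have DE : D = 1 by apply/le_anti; rewrite D1 D1'.
    move=> r _; elim: r => // r IH; apply: (le_trans IH).
    have F := F4 D n0 Hx r.
    change (V r - D * V r.+1 = (1 - D ^+ n) * x r) in F.
    move: F; rewrite DE expr1n subrr mul0r mul1r => /eqP.
    by rewrite subr_eq0 => /eqP ->.
  have Dn : 0 < 1 - D ^+ n by rewrite subr_gt0 exprn_ilt1 ?(ltW D0) // -lt0n.
  case=> // r rn.
  have := HG (Ordinal rn); rewrite /= -leNgt => G0.
  have T1 := tele D n0 Hx r.+1 0.
  have T2 := tele D n0 Hx r.+1 (n - r.+1).
  have Vn : Vs n D x n = Vs n D x 0 by rewrite -(Vs_per D Hx 0) add0n.
  rewrite subnK ?(ltnW rn) // Vn in T2.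
  rewrite add0n in T1.
  have P := mulr_ge0 (ltW Dn) G0.
  rewrite mulrDr mulrN -T1 -T2 in P.
  have := HV (n - r.+1)%N.
  have Dr : 0 < D ^+ r.+1 by apply: exprn_gt0.
  move=> H2; have H3 : 0 <= D ^+ r.+1 * (V r.+1 - V 0).
    rewrite mulrBr; rewrite /V in H2 *; lra.
  by move: H3; rewrite pmulr_rge0 // subr_ge0.
have sumV : \sum_(r < n) V r = S * \sum_(l < n) \sum_(i < n) lam i * u i (a l).
  rewrite /V /Vs exchange_big /= /S mulr_suml; apply: eq_bigr => k _.
  rewrite -[LHS]mulr_sumr; congr (_ * _).
  rewrite /x /w [LHS]exchange_big [RHS]exchange_big /=; apply: eq_bigr => i _.
  rewrite -!mulr_sumr; congr (_ * _).
  under eq_bigr do rewrite mxE -shift_shift.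
  by rewrite (sum_shift (fun l => u i (a l))).
have [l Hl] : exists l : 'I_n, V 0 <= S * \sum_(i < n) lam i * u i (a l).
  case: (boolP [exists l : 'I_n, V 0 <= S * \sum_(i < n) lam i * u i (a l)]).
    by move=> /existsP.
  rewrite negb_exists => /forallP H; exfalso.
  have : \sum_(l < n) S * \sum_(i < n) lam i * u i (a l) < \sum_(l < n) V 0.
    apply: ltr_sum; first by apply/hasP; exists (Ordinal n0); rewrite ?mem_index_enum.
    by move=> l _; rewrite ltNge; apply: H.
  rewrite -mulr_sumr -sumV sumr_const card_ord => H1.
  have : \sum_(r < n) V 0 <= \sum_(r < n) V r.
    by apply: ler_sum => r _; exact: Vge.
  by rewrite sumr_const card_ord => H2; move: (lt_le_trans H1 H2); rewrite ltxx.
set b := fun _ : 'I_n => a l.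
have Wb : W u lam b D = \sum_(i < n) lam i * u i (a l).
  rewrite W_eq.
  have -> : \sum_(k < n) D ^+ k * w lam (uprof u b) k = S * \sum_(i < n) lam i * u i (a l).
    rewrite /S mulr_suml; apply: eq_bigr => k _; congr (_ * _).
    by apply: eq_bigr => i _; rewrite mxE.
  by rewrite [S * _]mulrC mulfK // gt_eqF.
have : Astar u lam D b.
  move=> c; apply: (le_trans (Ha c)); rewrite Wa Wb ler_pdivrMr //.
  by rewrite mulrC.
move=> /HSC; apply; by move=> k k' i.
Qed.
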